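(* Let $q$ be a prime power, let $m$ be a divisor of $n$ and set $s=n/m$. Let $\mathcal{F}$ be a flag of type $(ms_1,\ldots,ms_r)$ on $\mathbb{F}_{q^n}$ (with $1\le s_1<\cdots<s_r<s$) whose best friend is the subfield $\mathbb{F}_{q^m}$, and let $\beta\in\mathbb{F}_{q^n}^*$. Then $d_f(\mathrm{Orb}_\beta(\mathcal{F}))=0$ if and only if $\beta\in\mathbb{F}_{q^m}^*$. If $\beta\notin\mathbb{F}_{q^m}^*$, then $2m$ divides $d_f(\mathrm{Orb}_\beta(\mathcal{F}))$ and $$2m\le d_f(\mathrm{Orb}_\beta(\mathcal{F}))\le 2m\left(\sum_{s_i\le\lfloor s/2\rfloor}s_i+\sum_{s_i>\lfloor s/2\rfloor}(s-s_i)\right).$$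
   Context: A flag of type $(t_1,\ldots,t_r)$ on $\mathbb{F}_{q^n}$ is a sequence $(\mathcal{F}_1,\ldots,\mathcal{F}_r)$ of $\mathbb{F}_q$-subspaces with $\{0\}\subsetneq\mathcal{F}_1\subsetneq\cdots\subsetneq\mathcal{F}_r\subsetneq\mathbb{F}_{q^n}$ and $\dim_{\mathbb{F}_q}\mathcal{F}_i=t_i$. For $\beta\in\mathbb{F}_{q^n}^*$ of multiplicative order $|\beta|$, $\mathcal{F}\beta=(\mathcal{F}_1\beta,\ldots,\mathcal{F}_r\beta)$ with $\mathcal{U}\beta=\{u\beta:u\in\mathcal{U}\}$, and $\mathrm{Orb}_\beta(\mathcal{F})=\{\mathcal{F}\beta^j:0\le j\le|\beta|-1\}$. Subspace distance: $d_S(\mathcal{U},\mathcal{V})=\dim(\mathcal{U}+\mathcal{V})-\dim(\mathcal{U}\cap\mathcal{V})$; flag distance: $d_f(\mathcal{F},\mathcal{F}')=\sum_{i=1}^r d_S(\mathcal{F}_i,\mathcal{F}'_i)$. The minimum distance $d_f(\mathcal{C})$ of a set $\mathcal{C}$ of flags is the minimum of $d_f$ over pairs of distinct elements, and $d_f(\mathcal{C})=0$ if $|\mathcal{C}|=1$. A subfield $\mathbb{F}_{q^m}$ is a friend of $\mathcal{F}$ if every $\mathcal{F}_i$ is an $\mathbb{F}_{q^m}$-vector space; the best friend is the largest friend. *)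

(* Defs.v *)
From HB Require Import structures.
From mathcomp Require Import all_boot all_order all_algebra all_field.
Set Implicit Arguments. Unset Strict Implicit. Unset Printing Implicit Defensive.
Import GRing.Theory.
Local Open Scope ring_scope.

(* F plays the role of F_q (a finite field, hence q = #|F| is a prime power),
   L is a finite-dimensional field extension of F, i.e. L = F_{q^n} with
   n = \dim {:L}. *)

Section Flags.
Variables (F : finFieldType) (L : fieldExtType F).

(* multiplicative order of b : least k >= 1 with b ^+ k = 1 (searched up to
   q^n, which suffices for b <> 0 since b ^+ (q^n - 1) = 1) *)
Definition morder (b : L) : nat :=
  (find (fun k => b ^+ k.+1 == 1) (iota 0 (#|F| ^ \dim {:L})%N)).+1.

Definition vsmul (U : {vspace L}) (b : L) : {vspace L} := (amulr b @: U)%VS.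

Definition dS (U V : {vspace L}) : nat := (\dim (U + V) - \dim (U :&: V))%N.

Local Notation flag r := {ffun 'I_r -> {vspace L}}.

Definition is_flag_of_type (r : nat) (Fl : flag r) (t : 'I_r -> nat) : Prop :=
  [/\ forall i, \dim (Fl i) = t i,
      forall i, Fl i != 0%VS,
      forall i j : 'I_r, (i < j)%N -> (Fl i <= Fl j)%VS && (Fl i != Fl j)
    & forall i, Fl i != fullv].

Definition df (r : nat) (A B : flag r) : nat := (\sum_(i < r) dS (A i) (B i))%N.

Definition flagmul (r : nat) (Fl : flag r) (b : L) : flag r :=
  [ffun i => vsmul (Fl i) b].

Definition Orb (r : nat) (Fl : flag r) (b : L) : seq (flag r) :=
  [seq flagmul Fl (b ^+ j) | j <- iota 0 (morder b)].

(* minimum distance of a (finite) set of flags; 0 if there are no two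
   distinct elements *)
Definition mindist (r : nat) (C : seq (flag r)) : nat :=
  let D := [seq df p.1 p.2 | p <- [seq (x, y) | x <- C, y <- C] & p.1 != p.2] in
  foldr minn (head 0%N D) D.

(* K = F_{q^m} is a friend of Fl : every Fl_i is a K-vector space *)
Definition friend (r : nat) (Fl : flag r) (K : {subfield L}) : Prop :=
  forall i, (K * Fl i <= Fl i)%VS.

Definition best_friend (r : nat) (Fl : flag r) (K : {subfield L}) : Prop :=
  friend Fl K /\ forall K' : {subfield L}, friend Fl K' -> (\dim K' <= \dim K)%N.

End Flags.

Notation flag L r := {ffun 'I_r -> {vspace L}}.

(* Main.v *)
Require Import Defs.
From HB Require Import structures.
From mathcomp Require Import all_boot all_order all_algebra all_field zify.
Import GRing.Theory.
Local Open Scope ring_scope.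

Set Implicit Arguments. Unset Strict Implicit.
Section H.
Variables (F : finFieldType) (L : fieldExtType F).
Implicit Types (U V : {vspace L}) (K : {subfield L}).

Lemma vsmul_mem U c u : u \in U -> u * c \in vsmul U c.
Proof. by move=> uU; have := memv_img (amulr c) uU; rewrite lfunE. Qed.

Lemma vsmul_memP U c v : v \in vsmul U c -> exists2 u, u \in U & v = u * c.
Proof. by case/memv_imgP=> u uU ->; exists u; rewrite ?lfunE. Qed.

Lemma dim_vsmul U c : c != 0 -> \dim (vsmul U c) = \dim U.
Proof.
move=> c0; apply: limg_dim_eq.
by rewrite (eqP (lker0_amulr _)) ?capv0 ?unitfE.
Qed.

Lemma vsmul_K K U c : (K * U <= U)%VS -> c \in K -> c != 0 -> vsmul U c = U.
Proof.
move=> /prodvP KU cK c0; apply/eqP; rewrite eqEsubv; apply/andP; split.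
  apply/subvP=> v /vsmul_memP[u uU ->]; by rewrite mulrC KU.
apply/subvP=> u uU; have -> : u = (u * c^-1) * c by rewrite -mulrA mulVf ?mulr1.
by apply: vsmul_mem; rewrite mulrC KU // rpredV.
Qed.

Lemma vsmul_mod K U c : (K * U <= U)%VS -> (K * vsmul U c <= vsmul U c)%VS.
Proof.
move=> /prodvP KU; apply/prodvP=> x v xK /vsmul_memP[u uU ->].
by rewrite mulrA vsmul_mem // KU.
Qed.

Lemma dS_div K U V : (K * U <= U)%VS -> (K * V <= V)%VS -> \dim U = \dim V ->
  (2 * \dim K %| dS U V)%N.
Proof.
move=> KU KV dUV.
have KUV : (K * (U + V) <= U + V)%VS.
  apply/prodvP=> x w xK /memv_addP[u uU [v vV ->]].
  by rewrite mulrDr memv_add // (prodvP KU, prodvP KV).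
have := dimv_sum_cap U V => e.
have -> : dS U V = (2 * (\dim (U + V) - \dim U))%N by rewrite /dS; lia.
rewrite dvdn_pmul2l // dvdn_sub // field_module_dimS //.
Qed.

Lemma dS_eq0 U V : dS U V = 0%N -> U = V.
Proof.
rewrite /dS => /eqP; rewrite subn_eq0 => h.
have e : (U :&: V)%VS = (U + V)%VS.
  by apply/eqP; rewrite eqEdim h andbT (subv_trans (capvSl _ _) (addvSl _ _)).
apply/eqP; rewrite eqEsubv; apply/andP; split.
  by rewrite (subv_trans (addvSl U V)) // -e capvSr.
by rewrite (subv_trans (addvSr U V)) // -e capvSl.
Qed.

Lemma dS_le U V a : \dim U = a -> \dim V = a ->
  (dS U V <= 2 * a)%N /\ (dS U V <= 2 * (\dim {:L} - a))%N.
Proof.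
move=> dU dV; have := dimv_sum_cap U V; have := dimvS (subvf (U + V)).
rewrite /dS dU dV; lia.
Qed.

Lemma friend_adjoin r (Fl : flag L r) K b :
  friend Fl K -> (forall i, vsmul (Fl i) b = Fl i) -> friend Fl <<K; b>>%AS.
Proof.
move=> fK fb i; apply/prodvP=> x u /Fadjoin_polyP[p pK ->] uU.
have bU : forall k u, u \in Fl i -> b ^+ k * u \in Fl i.
  elim=> [|k IH] w wU; first by rewrite mul1r.
  by rewrite exprS -mulrA mulrC -(fb i) vsmul_mem // IH.
rewrite horner_coef mulr_suml; apply: memv_suml => k _.
by rewrite -mulrA (prodvP (fK i)) ?bU // (polyOverP pK).
Qed.

Lemma fix_in_K r (Fl : flag L r) K b :
  best_friend Fl K -> (forall i, vsmul (Fl i) b = Fl i) -> b \in K.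
Proof.
case=> fK bf fb; have := bf _ (friend_adjoin fK fb) => le.
have : (K == <<K; b>>%AS :> {vspace L}) by rewrite eqEdim subv_adjoin.
by move/eqP->; rewrite memv_adjoin.
Qed.

End H.
Lemma foldr_minn_mem (x0 : nat) D : foldr minn x0 D \in x0 :: D.
Proof.
elim: D => [|a D IH] /=; first by rewrite inE.
rewrite /minn; case: ifP => _; first by rewrite !inE eqxx orbT.
by move: IH; rewrite !inE; case/orP=> ->; rewrite ?orbT.
Qed.

Lemma foldr_minn_le (x0 : nat) D y : y \in D -> (foldr minn x0 D <= y)%N.
Proof.
elim: D => [|a D IH] //=; rewrite inE => /orP[/eqP->|/IH h].
  exact: geq_minl.
exact: leq_trans (geq_minr _ _) h.
Qed.

Section M.
Variables (F : finFieldType) (L : fieldExtType F) (r : nat).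

Lemma mindist_le (C : seq (flag L r)) x y : x \in C -> y \in C -> x != y ->
  (mindist C <= df x y)%N.
Proof.
move=> xC yC xy; rewrite /mindist; apply: foldr_minn_le.
apply/mapP; exists (x, y) => //; rewrite mem_filter xy /=.
by apply/allpairsP; exists (x, y).
Qed.

Lemma mindistP (C : seq (flag L r)) (P : nat -> Prop) :
  (forall x y, x \in C -> y \in C -> x != y -> P (df x y)) ->
  (exists x y, [/\ x \in C, y \in C & x != y]) -> P (mindist C).
Proof.
move=> HP [x [y [xC yC xy]]]; rewrite /mindist.
set D := map _ _.
have HD : forall z, z \in D -> P z.
  move=> z /mapP[p]; rewrite mem_filter => /andP[p12 /allpairsP[[u v] [uC vC pe]]] ->; subst p.
  exact: HP.
have hin : df x y \in D.
  apply/mapP; exists (x, y) => //; rewrite mem_filter xy /=.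
  by apply/allpairsP; exists (x, y).
case: D HD hin => [|a D'] // HD _ /=.
have := foldr_minn_mem a D' => h.
have h2 : minn a (foldr minn a D') \in a :: D'.
  by rewrite /minn; case: ifP => _; rewrite ?inE ?eqxx.
exact: HD.
Qed.

Lemma mindist0 (C : seq (flag L r)) :
  (forall x y, x \in C -> y \in C -> x = y) -> mindist C = 0%N.
Proof.
move=> H; rewrite /mindist.
rewrite (@eq_in_filter _ _ pred0); first by rewrite filter_pred0.
by move=> p /allpairsP[[u v] [uC vC ->]] /=; rewrite (H u v uC vC) eqxx.
Qed.
End M.
Unset Implicit Arguments. Set Strict Implicit.

Theorem proposition4p4 (F : finFieldType) (L : fieldExtType F)
    (m : nat) (K : {subfield L}) (r : nat) (sv : 'I_r -> nat)
    (Fl : flag L r) (b : L) :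
  let n := \dim {:L} in
  let s := (n %/ m)%N in
  (m %| n)%N ->
  \dim K = m ->
  (forall i : 'I_r, (1 <= sv i < s)%N) ->
  (forall i j : 'I_r, (i < j)%N -> (sv i < sv j)%N) ->
  is_flag_of_type Fl (fun i => (m * sv i)%N) ->
  best_friend Fl K ->
  b != 0 ->
  (mindist (Orb Fl b) = 0%N <-> b \in K) /\
  (b \notin K ->
     let d := mindist (Orb Fl b) in
     [/\ (2 * m %| d)%N, (2 * m <= d)%N &
         (d <= 2 * m * \sum_(i < r) (if (sv i <= s %/ 2)%N then sv i else s - sv i))%N]).
Proof.
move=> n s mn dK svr svm [Fdim _ _ _] bfK b0.
have fK := bfK.1.
have m0 : (0 < m)%N by rewrite -dK adim_gt0.
have ns : n = (s * m)%N by rewrite /s divnK.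
have OrbP : forall x, x \in Orb Fl b -> exists j, x = flagmul Fl (b ^+ j).
  by move=> x /mapP[j _ ->]; exists j.
have fmE : forall c i, flagmul Fl c i = vsmul (Fl i) c by move=> c i; rewrite ffunE.
have Kmod : forall j i, (K * flagmul Fl (b ^+ j) i <= flagmul Fl (b ^+ j) i)%VS.
  by move=> j i; rewrite fmE vsmul_mod.
have fdim : forall j i, \dim (flagmul Fl (b ^+ j) i) = (m * sv i)%N.
  by move=> j i; rewrite fmE dim_vsmul ?expf_neq0 // Fdim.
have fm1 : flagmul Fl 1 = Fl.
  by apply/ffunP=> i; rewrite fmE (vsmul_K (fK i)) ?mem1v ?oner_neq0.
have partA : b \in K -> mindist (Orb Fl b) = 0%N.
  move=> bK; apply: mindist0 => x y /OrbP[i ->] /OrbP[j ->].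
  have e : forall k, flagmul Fl (b ^+ k) = Fl.
    by move=> k; apply/ffunP=> t; rewrite fmE (vsmul_K (fK t)) ?rpredX ?expf_neq0.
  by rewrite !e.
have partB : b \notin K -> let d := mindist (Orb Fl b) in
     [/\ (2 * m %| d)%N, (0 < d)%N &
         (d <= 2 * m * \sum_(i < r) (if (sv i <= s %/ 2)%N then sv i else s - sv i))%N].
  move=> bK d.
  have b1 : b != 1 by apply: contraNneq bK => ->; rewrite mem1v.
  have mo : (1 < morder b)%N.
    rewrite /morder; have : (0 < #|F| ^ \dim {:L})%N.
      by rewrite expn_gt0; apply/orP; left; apply/card_gt0P; exists 0.
    case: (#|F| ^ _)%N => [|N] //= _.
    by rewrite expr1 (negbTE b1).
  have in0 : flagmul Fl 1 \in Orb Fl b.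
    apply/mapP; exists 0%N; first by rewrite mem_iota add0n (ltnW mo).
    by rewrite expr0.
  rewrite fm1 in in0.
  have in1 : flagmul Fl b \in Orb Fl b.
    apply/mapP; exists 1%N; first by rewrite mem_iota add0n mo.
    by rewrite expr1.
  have neq : Fl != flagmul Fl b.
    apply: contra bK => /eqP e; apply: (fix_in_K bfK) => i.
    by rewrite -fmE -e.
  split.
  - apply: (mindistP (P := fun z => (2 * m %| z)%N)); last by exists Fl, (flagmul Fl b).
    move=> x y /OrbP[i ->] /OrbP[j ->] _; rewrite /df; apply: dvdn_sum => k _.
    by rewrite -dK; apply: dS_div; rewrite ?Kmod // !fdim.
  - apply: (mindistP (P := fun z => (0 < z)%N)); last by exists Fl, (flagmul Fl b).
    move=> x y _ _ xy; rewrite lt0n; apply: contra xy => /eqP.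
    rewrite /df => /eqP; rewrite sum_nat_eq0 => /forallP h.
    by apply/eqP/ffunP=> k; apply: dS_eq0; apply/eqP; apply: h.
  - apply: leq_trans (mindist_le in0 in1 neq) _.
    rewrite /df big_distrr /=; apply: leq_sum => k _.
    have Fk := Fdim k.
    have Fbk : \dim (flagmul Fl b k) = (m * sv k)%N.
      by rewrite fmE dim_vsmul // Fdim.
    have [h1 h2] := dS_le Fk Fbk.
    rewrite -/n ns in h2.
    have := svr k; case: ifP => _ hk; nia.
split.
  split; last exact: partA.
  by move=> h; apply/negPn/negP => /partB [_]; rewrite h.
move=> bK d; have [h1 h2 h3] := partB bK.
split => //; exact: dvdn_leq.
Qed.
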